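(* Let $\mathcal G$ be an étale groupoid and $X$ a right $\mathcal G$-space with basic action, and $p\colon X\to X/\mathcal G$ the orbit projection. Then $X\times_{p,X/\mathcal G,p}X=\{(x_1,x_2)\in X\times X:p(x_1)=p(x_2)\}$ is closed in $X\times X$ if and only if $X/\mathcal G$ is Hausdorff.
   Context: An étale groupoid: topologies on arrow space $\mathcal G$ and object space $\mathcal G^0\subseteq\mathcal G$ with $r,s$ local homeomorphisms, multiplication and inversion continuous. A right $\mathcal G$-space: space $X$, continuous anchor $s\colon X\to\mathcal G^0$, continuous action $X\times_{s,\mathcal G^0,r}\mathcal G\to X$ with $s(xg)=s(g)$, $(xg_1)g_2=x(g_1g_2)$, $x\,s(x)=x$. $X/\mathcal G$ carries the quotient topology. The action is basic if $(x,g)\mapsto(xg,x)$, $X\times_{s,\mathcal G^0,r}\mathcal G\to X\times X$, is a homeomorphism onto its image with the subspace topology. *)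

(* Defs.v *)
From HB Require Import structures.
From mathcomp Require Import all_boot all_order all_algebra.
From mathcomp Require Import all_classical all_reals all_analysis.
Set Implicit Arguments. Unset Strict Implicit. Unset Printing Implicit Defensive.
Local Open Scope classical_set_scope.

Definition open_in (T : topologicalType) (D A : set T) : Prop :=
  exists W : set T, open W /\ A = W `&` D.

(* f : S -> T (with values in D) is a local homeomorphism S -> D, D carrying
   the subspace topology: every point has an open neighbourhood V on which f
   is injective and continuous, and f maps open subsets of V to sets open in D
   (so f(V) is open in D and f|_V : V -> f(V) is a homeomorphism). *)
Definition local_homeo_onto (S T : topologicalType) (f : S -> T) (D : set T) :=
  (forall a, D (f a)) /\
  forall a, exists V : set S, [/\ open V, V a, {in V &, injective f},
     {within V, continuous f} &
     forall O, open O -> O `<=` V -> open_in D (f @` O)].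

(* Étale groupoid: arrow space G, unit space U = G^0 ⊆ G (subspace topology),
   range r, source s, multiplication mul (relevant on composable pairs
   s g = r h; g h means "first h then g" convention: gh defined iff s g = r h),
   inversion inv. *)
Definition etale_groupoid (G : topologicalType) (U : set G)
    (r s inv : G -> G) (mul : G -> G -> G) : Prop :=
  (forall g, U (r g) /\ U (s g)) /\
  (forall u, U u -> r u = u /\ s u = u) /\
  (forall g h, s g = r h -> r (mul g h) = r g /\ s (mul g h) = s h) /\
  (forall g h k, s g = r h -> s h = r k -> mul (mul g h) k = mul g (mul h k)) /\
  (forall g, mul (r g) g = g /\ mul g (s g) = g) /\
  (forall g, r (inv g) = s g /\ s (inv g) = r g /\
             mul g (inv g) = r g /\ mul (inv g) g = s g) /\
  local_homeo_onto r U /\ local_homeo_onto s U /\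
  {within [set p : G * G | s p.1 = r p.2], continuous (fun p => mul p.1 p.2)} /\
  continuous inv.

Definition right_action (G X : topologicalType) (U : set G)
    (r s : G -> G) (mul : G -> G -> G) (sX : X -> G) (act : X -> G -> X) : Prop :=
  (forall x, U (sX x)) /\ continuous sX /\
  {within [set p : X * G | sX p.1 = r p.2], continuous (fun p => act p.1 p.2)} /\
  (forall x g, sX x = r g -> sX (act x g) = s g) /\
  (forall x g1 g2, sX x = r g1 -> s g1 = r g2 ->
     act (act x g1) g2 = act x (mul g1 g2)) /\
  (forall x, act x (sX x) = x).

Definition basic_action (G X : topologicalType) (r : G -> G)
    (sX : X -> G) (act : X -> G -> X) : Prop :=
  let D := [set p : X * G | sX p.1 = r p.2] in
  let phi := fun p : X * G => (act p.1 p.2, p.1) in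
  [/\ {in D &, injective phi}, {within D, continuous phi} &
      forall O, open_in D O -> O `<=` D -> open_in (phi @` D) (phi @` O)].

Section OrbitSpace.
Variables (G X : topologicalType) (r : G -> G) (sX : X -> G) (act : X -> G -> X).

Definition orbit (x : X) : set X := [set y | exists g, sX x = r g /\ y = act x g].

Definition orbit_space := {A : set X | exists x, A = orbit x}.

Definition orbit_proj (x : X) : orbit_space :=
  exist (fun A => exists x, A = orbit x) (orbit x) (ex_intro _ x erefl).

HB.instance Definition _ := gen_eqMixin orbit_space.
HB.instance Definition _ := gen_choiceMixin orbit_space.

Definition orbit_open (A : set orbit_space) := open (orbit_proj @^-1` A).

Program Definition orbit_space_topology :=
  @isOpenTopological.Build orbit_space orbit_open _ _ _.
Next Obligation. by rewrite /orbit_open preimage_setT; exact: openT. Qed.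
Next Obligation. by move=> ? ? ? ?; exact: openI. Qed.
Next Obligation. by move=> I f ofi; apply: bigcup_open => i _; exact: ofi. Qed.
HB.instance Definition _ := orbit_space_topology.

End OrbitSpace.

(* Main.v *)
Require Import Defs.
From HB Require Import structures.
From mathcomp Require Import all_boot all_order all_algebra.
From mathcomp Require Import all_classical all_reals all_analysis.
Local Open Scope classical_set_scope.

Section Aux.
Variables (G X : topologicalType) (U : set G) (r s inv : G -> G)
    (mul : G -> G -> G) (sX : X -> G) (act : X -> G -> X).

Lemma proj_eq x y : Defs.orbit r sX act x = Defs.orbit r sX act y ->
  orbit_proj r sX act x = orbit_proj r sX act y.
Proof.
rewrite /orbit_proj => E.
move: (ex_intro _ x _) (ex_intro _ y _); rewrite E => p1 p2.
congr exist; exact: Prop_irrelevance.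
Qed.

Lemma proj_eq' x y : orbit_proj r sX act x = orbit_proj r sX act y ->
  Defs.orbit r sX act x = Defs.orbit r sX act y.
Proof. by move/(congr1 sval). Qed.

Lemma proj_surj (a : orbit_space r sX act) : exists x, a = orbit_proj r sX act x.
Proof.
case: a => A [x hA]; exists x; subst A; rewrite /orbit_proj.
congr exist; exact: Prop_irrelevance.
Qed.

Hypothesis HG : etale_groupoid U r s inv mul.
Hypothesis HA : right_action U r s mul sX act.

Lemma orbit_act x g : sX x = r g -> Defs.orbit r sX act (act x g) = Defs.orbit r sX act x.
Proof.
case: HG => rsU [Uid [mulrs [assoc [unit [invax _]]]]].
case: HA => sXU [sXc [actc [sXact [actmul actid]]]].
move=> hg; apply/seteqP; split => z.
- move=> [k [hk ->]]; rewrite sXact // in hk.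
  exists (mul g k); split; first by rewrite (mulrs _ _ hk).1.
  by rewrite actmul.
- move=> [k [hk ->]].
  have h1 : s (inv g) = r k by rewrite (invax g).2.1 -hg.
  have h2 : s g = r (mul (inv g) k) by rewrite (mulrs _ _ h1).1 (invax g).1.
  exists (mul (inv g) k); split; first by rewrite sXact.
  rewrite actmul // -assoc //; last by rewrite (invax g).1.
  by rewrite (invax g).2.2.1 -hg hk (unit k).1.
Qed.


Lemma proj_open (O : set X) : open O ->
  open (orbit_proj r sX act @^-1` (orbit_proj r sX act @` O)).
Proof.
case: HG => rsU [Uid [mulrs [assoc [unit [invax [lhr _]]]]]].
case: HA => sXU [sXc [actc [sXact [actmul actid]]]].
move=> oO; rewrite openE => y [x Ox /proj_eq' E].
have : Defs.orbit r sX act y y.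
  exists (sX y); split; last by rewrite actid.
  by rewrite (Uid _ (sXU y)).1.
rewrite -E => -[g [hg yE]]; subst y.
have Dq : sX (act x g) = r (inv g) by rewrite sXact // (invax g).1.
have fq : act (act x g) (inv g) = x.
  by rewrite actmul ?(invax g).1 // (invax g).2.2.1 -hg actid.
move/subspace_continuousP: actc => /(_ (act x g, inv g) Dq).
move=> /(_ O); rewrite /from_subspace /= fq => /(_ (open_nbhs_nbhs (conj oO Ox))).
rewrite nbhs_simpl /within /= => -[[A B] [nA nB] AB].

move: nA nB => /= nA; rewrite nbhsE => -[B0 [oB0 B0g] B0B].
have [V [oV Vg _ _ imV]] := lhr.2 (inv g).
have [W [oW EW]] := imV (B0 `&` V) (openI oB0 oV) (@subIsetr _ _ _).
have Wy : W (sX (act x g)).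
  have : (W `&` U) (r (inv g)) by rewrite -EW; exists (inv g).
  by rewrite Dq => -[].
have nW : nbhs (act x g) (sX @^-1` W) by apply: sXc; exact: open_nbhs_nbhs.
rewrite /interior; apply: filterS (filterI nA nW) => y' [Ay' Wy'].
have : (W `&` U) (sX y') by split.
rewrite -EW => -[h [B0h Vh] rh].
exists (act y' h); last by apply: proj_eq; apply: orbit_act.
by apply: (AB (y', h)) => //; split => //; apply: B0B.
Qed.

End Aux.


Theorem lemma2p13 (G X : topologicalType) (U : set G) (r s inv : G -> G)
    (mul : G -> G -> G) (sX : X -> G) (act : X -> G -> X) :
  etale_groupoid U r s inv mul ->
  right_action U r s mul sX act ->
  basic_action r sX act ->
  closed [set q : X * X | orbit_proj r sX act q.1 = orbit_proj r sX act q.2]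
  <-> hausdorff_space (orbit_space r sX act).
Proof.
move=> HG HA _; split.
- move=> /closed_openC; rewrite openE => cR.
  rewrite open_hausdorff => a b /eqP nab.
  have [x ax] := proj_surj _ _ _ _ _ a; have [y bx] := proj_surj _ _ _ _ _ b; subst a b.
  have /cR : (~` [set q : X * X | orbit_proj r sX act q.1 = orbit_proj r sX act q.2]) (x, y) by [].
  rewrite /interior => -[[P Q] [/= nP nQ] PQ].
  move: nP nQ; rewrite !nbhsE => -[P0 [oP0 P0x] P0P] [Q0 [oQ0 Q0y] Q0Q].
  exists (orbit_proj r sX act @` P0, orbit_proj r sX act @` Q0).
    by rewrite !inE; split; [exists x | exists y].
  split; first exact: (@proj_open _ _ _ _ _ _ _ _ _ HG HA _ oP0).
    exact: (@proj_open _ _ _ _ _ _ _ _ _ HG HA _ oQ0).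
  apply/eqP; rewrite -subset0 => z [[x' Px' <-] [y' Qy' E]].
  by apply: (PQ (x', y')); [split; [apply: P0P | apply: Q0Q] | rewrite /= E].
- move=> H; rewrite -openC openE => -[x y] /= nR.
  move: H; rewrite open_hausdorff => /(_ _ _ (introN eqP nR)).
  move=> [[A B]] /=; rewrite !inE => -[xA yB] [oA oB AB0].
  exists (orbit_proj r sX act @^-1` A, orbit_proj r sX act @^-1` B).
    by split; apply: open_nbhs_nbhs.
  move=> [x' y'] [/= Ax' By'] /= E.
  have : (A `&` B) (orbit_proj r sX act x') by split => //; rewrite E.
  by rewrite AB0.
Qed.
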